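(* Let $\mathcal{V}$ be a finite non-trivial quantale, and let $\mathsf{F}\colon\mathbf{Cat}(\mathcal{V})_{\mathrm{sym}}\to\mathbf{Cat}(\mathcal{V})_{\mathrm{sym}}$ be a lifting of a finitary functor $\mathsf{G}\colon\mathbf{Set}\to\mathbf{Set}$ such that $\mathsf{F}$ preserves initial morphisms. Then there is a set $\Lambda$ of predicate liftings for $\mathsf{F}$ of finite arity such that the coalgebraic logic $\mathcal{L}(\Lambda)$ is expressive, i.e. $ld^\Lambda_\alpha\le bd^{\mathsf{F}}_\alpha$ (pointwise in $\mathcal{V}$) for every $\mathsf{F}$-coalgebra $(X,a,\alpha)$.
   Context: A quantale $(\mathcal{V},\otimes,k)$ is a complete lattice with commutative monoid structure, each $u\otimes-$ preserving joins, $\hom(u,-)$ its right adjoint. Symmetric $\mathcal{V}$-categories $(X,a)$: $a\colon X\times X\to\mathcal{V}$ with $k\le a(x,x)$, $a(x,y)\otimes a(y,z)\le a(x,z)$, $a(x,y)=a(y,x)$; with $\mathcal{V}$-functors ($a(x,y)\le b(fx,fy)$; initial if equality) they form $\mathbf{Cat}(\mathcal{V})_{\mathrm{sym}}$. $\mathcal{V}_s=(\mathcal{V},\hom_s)$ with $\hom_s(u,v)=\hom(u,v)\wedge\hom(v,u)$; $\mathcal{V}_s^n$ has $[f,g]=\bigwedge_i\hom_s(f(i),g(i))$. $\mathsf{G}$ is finitary if every $\mathfrak{x}\in\mathsf{G}X$ lies in the image of $\mathsf{G}m$ for some finite subset inclusion $m\colon A\to X$; $\mathsf{F}$ lifts $\mathsf{G}$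 if $|\mathsf{F}-|=\mathsf{G}|-|$. An $n$-ary predicate lifting for $\mathsf{F}$ is a natural transformation $\lambda\colon\mathbf{Cat}(\mathcal{V})_{\mathrm{sym}}(-,\mathcal{V}_s^n)\to\mathbf{Cat}(\mathcal{V})_{\mathrm{sym}}(\mathsf{F}-,\mathcal{V}_s)$. An $\mathsf{F}$-coalgebra $(X,a,\alpha)$ is a $\mathcal{V}$-functor $\alpha\colon(X,a)\to\mathsf{F}(X,a)$; a coalgebra morphism $f\colon(X,a,\alpha)\to(Y,b,\beta)$ is a $\mathcal{V}$-functor with $\beta f=\mathsf{F}f\cdot\alpha$. Behavioural distance: $bd^{\mathsf{F}}_\alpha(x,y)=\bigvee\{b(f(x),f(y))\mid f\colon(X,a,\alpha)\to(Y,b,\beta)\text{ coalgebra morphism}\}$. Formulas of $\mathcal{L}(\Lambda)$: $\phi::=\top\mid\phi_1\vee\phi_2\mid\phi_1\wedge\phi_2\mid u\otimes\phi\mid\hom_s(u,\phi)\mid\lambda(\phi_1,\dots,\phi_n)$ ($u\in\mathcal{V}$, $\lambda\in\Lambda$ $n$-ary). Semantics on $(X,a,\alpha)$ is a $\mathcal{V}$-functor $[\![\phi]\!]\colon(X,a)\to\mathcal{V}_s$: $[\![\top]\!]$ constantly $\top$; $\vee,\wedge,u\otimes-,\hom_s(u,-)$ interpreted pointwise in $\mathcal{V}$; $[\![\lambda(\phi_1,\dots,\phi_n)]\!]=\lambda_{(X,a)}(\langle[\![\phi_1]\!],\dots,[\![\phi_n]\!]\rangle)\cdot\alpha$. Logical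 distance: $ld^\Lambda_\alpha(x,y)=\bigwedge_{\phi\in\mathcal{L}(\Lambda)}\hom_s([\![\phi]\!](x),[\![\phi]\!](y))$. *)

(* Defs.v *)
From HB Require Import structures.
From mathcomp Require Import all_boot all_order.
From Stdlib Require Import ClassicalEpsilon List.
Set Implicit Arguments. Unset Strict Implicit. Unset Printing Implicit Defensive.
Import Order.Theory.
Local Open Scope order_scope.

Definition asb (P : Prop) : bool :=
  if excluded_middle_informative P then true else false.

Section Quantale.
Context {disp : Order.disp_t} {V : finTBLatticeType disp}.

Definition bigjoinP (P : V -> Prop) : V := \join_(v | asb (P v)) v.
Definition bigmeetP (P : V -> Prop) : V := \meet_(v | asb (P v)) v.

Definition is_quantale (tens : V -> V -> V) (k : V) : Prop :=
  [/\ (forall u v w, tens u (tens v w) = tens (tens u v) w),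
      (forall u v, tens u v = tens v u),
      (forall u, tens k u = u) &
      (forall u (A : {set V}), tens u (\join_(v in A) v) = \join_(v in A) tens u v)].

(* hom(u,-) : the right adjoint of u ⊗ - *)
Definition qhom (tens : V -> V -> V) (u v : V) : V := \join_(w | tens u w <= v) w.
Definition qhom_s tens (u v : V) : V := qhom tens u v `&` qhom tens v u.

(* the structure of V_s^n *)
Definition qhom_sn tens (n : nat) (f g : 'I_n -> V) : V :=
  \meet_(i < n) qhom_s tens (f i) (g i).

Definition is_symVcat (tens : V -> V -> V) (k : V) (X : Type) (a : X -> X -> V) : Prop :=
  [/\ (forall x, k <= a x x),
      (forall x y z, tens (a x y) (a y z) <= a x z) &
      (forall x y, a x y = a y x)].

Definition vfun (X Y : Type) (a : X -> X -> V) (b : Y -> Y -> V) (f : X -> Y) : Prop :=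
  forall x y, a x y <= b (f x) (f y).

Definition vinitial (X Y : Type) (a : X -> X -> V) (b : Y -> Y -> V) (f : X -> Y) : Prop :=
  forall x y, a x y = b (f x) (f y).

End Quantale.

Record setFunctor := SetFunctor {
  Gob : Type -> Type;
  Gmap : forall X Y : Type, (X -> Y) -> Gob X -> Gob Y;
  Gmap_id : forall X (u : Gob X), Gmap (fun x : X => x) u = u;
  Gmap_comp : forall X Y Z (f : X -> Y) (g : Y -> Z) (u : Gob X),
      Gmap (fun x => g (f x)) u = Gmap g (Gmap f u)
}.
Arguments Gmap G {X Y} f u : rename.

Definition finitary (G : setFunctor) : Prop :=
  forall (X : Type) (u : Gob G X), exists (s : list X) (w : Gob G {x : X | In x s}),
    Gmap G (@proj1_sig X (fun x => In x s)) w = u.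

Section Lifting.
Context {disp : Order.disp_t} {V : finTBLatticeType disp}.
Variables (tens : V -> V -> V) (k : V) (G : setFunctor).

(* Object part of a functor F on Cat(V)_sym with |F(X,a)| = G X; the
   morphism part is forced to be |F f| = G f. *)
Definition liftdata := forall X : Type, (X -> X -> V) -> Gob G X -> Gob G X -> V.

Definition is_lifting (F : liftdata) : Prop :=
  (forall X (a : X -> X -> V), is_symVcat tens k a -> is_symVcat tens k (F X a)) /\
  (forall X Y (a : X -> X -> V) (b : Y -> Y -> V) (f : X -> Y),
      is_symVcat tens k a -> is_symVcat tens k b -> vfun a b f ->
      vfun (F X a) (F Y b) (Gmap G f)).

Definition preserves_initial (F : liftdata) : Prop :=
  forall X Y (a : X -> X -> V) (b : Y -> Y -> V) (f : X -> Y),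
    is_symVcat tens k a -> is_symVcat tens k b -> vinitial a b f ->
    vinitial (F X a) (F Y b) (Gmap G f).

Definition predlift_fun (n : nat) :=
  forall X : Type, (X -> X -> V) -> (X -> 'I_n -> V) -> Gob G X -> V.

Definition is_predlift (F : liftdata) (n : nat) (lam : predlift_fun n) : Prop :=
  (forall X (a : X -> X -> V) (phi : X -> 'I_n -> V),
      is_symVcat tens k a -> vfun a (qhom_sn tens (n:=n)) phi ->
      vfun (F X a) (qhom_s tens) (lam X a phi)) /\
  (forall X Y (a : X -> X -> V) (b : Y -> Y -> V) (f : X -> Y) (phi : Y -> 'I_n -> V),
      is_symVcat tens k a -> is_symVcat tens k b -> vfun a b f ->
      vfun b (qhom_sn tens (n:=n)) phi ->
      forall u, lam X a (fun x => phi (f x)) u = lam Y b phi (Gmap G f u)).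

Definition is_coalg (F : liftdata) X (a : X -> X -> V) (alpha : X -> Gob G X) : Prop :=
  is_symVcat tens k a /\ vfun a (F X a) alpha.

Definition is_coalg_mor (F : liftdata) X Y (a : X -> X -> V) (alpha : X -> Gob G X)
  (b : Y -> Y -> V) (beta : Y -> Gob G Y) (f : X -> Y) : Prop :=
  vfun a b f /\ forall x, beta (f x) = Gmap G f (alpha x).

Definition bd (F : liftdata) X (a : X -> X -> V) (alpha : X -> Gob G X) (x y : X) : V :=
  bigjoinP (fun v => exists (Y : Type) (b : Y -> Y -> V) (beta : Y -> Gob G Y) (f : X -> Y),
     is_coalg F b beta /\ is_coalg_mor F a alpha b beta f /\ v = b (f x) (f y)).

Inductive formula (L : Type) (ar : L -> nat) : Type :=
  | fTop : formula ar
  | fOr : formula ar -> formula ar -> formula ar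
  | fAnd : formula ar -> formula ar -> formula ar
  | fTens : V -> formula ar -> formula ar
  | fHom : V -> formula ar -> formula ar
  | fLam : forall l : L, ('I_(ar l) -> formula ar) -> formula ar.

Fixpoint sem (L : Type) (ar : L -> nat) (lam : forall l, predlift_fun (ar l))
  X (a : X -> X -> V) (alpha : X -> Gob G X) (phi : formula ar) : X -> V :=
  match phi with
  | fTop => fun _ => \top
  | fOr p q => fun x => sem lam a alpha p x `|` sem lam a alpha q x
  | fAnd p q => fun x => sem lam a alpha p x `&` sem lam a alpha q x
  | fTens u p => fun x => tens u (sem lam a alpha p x)
  | fHom u p => fun x => qhom_s tens u (sem lam a alpha p x)
  | fLam l args => fun x =>
      lam l X a (fun z i => sem lam a alpha (args i) z) (alpha x)
  end.

Definition ld (L : Type) (ar : L -> nat) (lam : forall l, predlift_fun (ar l))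
  X (a : X -> X -> V) (alpha : X -> Gob G X) (x y : X) : V :=
  bigmeetP (fun v => exists phi : formula ar,
     v = qhom_s tens (sem lam a alpha phi x) (sem lam a alpha phi y)).

End Lifting.

(* Main.v *)
Require Import Defs.
From mathcomp Require Import all_boot all_order.
From Stdlib Require Import ClassicalEpsilon List.
Set Implicit Arguments. Unset Strict Implicit. Unset Printing Implicit Defensive.
Import Order.Theory.
Local Open Scope order_scope.

Lemma asbP (P : Prop) : asb P = true <-> P.
Proof. by rewrite /asb; case: excluded_middle_informative. Qed.

Section Q.
Context {disp : Order.disp_t} {V : finTBLatticeType disp}.
Variables (tens : V -> V -> V) (k : V).
Hypothesis HQ : is_quantale tens k.

Lemma tA u v w : tens u (tens v w) = tens (tens u v) w.
Proof. by case: HQ. Qed.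
Lemma tC u v : tens u v = tens v u.
Proof. by case: HQ. Qed.
Lemma t1 u : tens k u = u.
Proof. by case: HQ. Qed.
Lemma tJ u (A : {set V}) : tens u (\join_(v in A) v) = \join_(v in A) tens u v.
Proof. by case: HQ. Qed.

Lemma join2 (w1 w2 : V) : \join_(v in [set w1; w2]) v = w1 `|` w2.
Proof.
apply/le_anti/andP; split.
  apply/joinsP => i; rewrite !inE => /orP[]/eqP->; by rewrite ?leUl ?leUr.
by rewrite leUx !(joins_sup (fun v => v)) // !inE eqxx ?orbT.
Qed.

Lemma tU u w1 w2 : tens u (w1 `|` w2) = tens u w1 `|` tens u w2.
Proof.
rewrite -join2 tJ; apply/le_anti/andP; split.
  apply/joinsP => i; rewrite !inE => /orP[]/eqP->; by rewrite ?leUl ?leUr.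
by rewrite leUx !(joins_sup (fun v => tens u v)) // !inE eqxx ?orbT.
Qed.

Lemma tmonor u w1 w2 : w1 <= w2 -> tens u w1 <= tens u w2.
Proof. by move=> h; rewrite -(join_r h) tU leUl. Qed.
Lemma tmonol u w1 w2 : w1 <= w2 -> tens w1 u <= tens w2 u.
Proof. by move=> h; rewrite tC (tC w2) tmonor. Qed.
Lemma tmono u1 u2 w1 w2 : u1 <= u2 -> w1 <= w2 -> tens u1 w1 <= tens u2 w2.
Proof. move=> h1 h2; apply: le_trans (tmonol _ h1) (tmonor _ h2). Qed.

Lemma homP u v w : (w <= qhom tens u v) = (tens u w <= v).
Proof.
apply/idP/idP => h.
  apply: le_trans (tmonor u h) _.
  have -> : qhom tens u v = \join_(x in [set x | tens u x <= v]) x.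
    by apply: eq_bigl => x; rewrite inE.
  by rewrite tJ; apply/joinsP => i; rewrite inE.
by rewrite /qhom (joins_sup (fun x => x)).
Qed.

Lemma homsP u v w : (w <= qhom_s tens u v) = (tens u w <= v) && (tens v w <= u).
Proof. by rewrite /qhom_s lexI !homP. Qed.

Lemma homsC u v : qhom_s tens u v = qhom_s tens v u.
Proof. by rewrite /qhom_s meetC. Qed.

Lemma hs_refl v : k <= qhom_s tens v v.
Proof. by rewrite homsP tC t1 lexx. Qed.

Lemma hs_trans c d p q r : c <= qhom_s tens p q -> d <= qhom_s tens q r ->
  tens c d <= qhom_s tens p r.
Proof.
rewrite !homsP => /andP[h1 h2] /andP[h3 h4]; apply/andP; split.
  rewrite tA; exact: le_trans (tmonol _ h1) h3.
rewrite (tC c d) tA; exact: le_trans (tmonol _ h4) h2.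
Qed.

Lemma hom_k c p q : k <= q -> c <= qhom_s tens p q -> c <= p.
Proof.
move=> hk; rewrite homsP => /andP[_ h].
by apply: le_trans h; rewrite -{1}(t1 c) tmonol.
Qed.

Lemma symV_hn n : is_symVcat tens k (qhom_sn tens (n:=n)).
Proof.
split.
- by move=> f; apply/meetsP => i _; apply: hs_refl.
- move=> f g h; apply/meetsP => i _; apply: hs_trans;
  exact: (meets_inf (fun i => qhom_s tens _ _)).
- by move=> f g; apply: eq_bigr => i _; rewrite homsC.
Qed.

Lemma symV_ev X (c : X -> X -> V) (w : X) : is_symVcat tens k c ->
  vfun c (qhom_s tens) (fun u => c u w).
Proof.
case=> _ ht hs u u'; rewrite homsP; apply/andP; split.
  by rewrite tC hs; apply: ht.
by rewrite tC; apply: ht.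
Qed.


Lemma tAC a b c : tens a (tens b c) = tens b (tens a c).
Proof. by rewrite tA (tC a b) -tA. Qed.

Lemma hs_or c p q p' q' : c <= qhom_s tens p q -> c <= qhom_s tens p' q' ->
  c <= qhom_s tens (p `|` p') (q `|` q').
Proof.
rewrite !homsP => /andP[h1 h2] /andP[h3 h4].
rewrite !(tC _ c) !tU !leUx !(tC c).
by rewrite !(le_trans h1, le_trans h2, le_trans h3, le_trans h4) ?leUl ?leUr.
Qed.

Lemma hs_and c p q p' q' : c <= qhom_s tens p q -> c <= qhom_s tens p' q' ->
  c <= qhom_s tens (p `&` p') (q `&` q').
Proof.
rewrite !homsP => /andP[h1 h2] /andP[h3 h4].
rewrite !lexI; apply/andP; split; apply/andP; split.
- exact: le_trans (tmonol _ (leIl _ _)) h1.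
- exact: le_trans (tmonol _ (leIr _ _)) h3.
- exact: le_trans (tmonol _ (leIl _ _)) h2.
- exact: le_trans (tmonol _ (leIr _ _)) h4.
Qed.

Lemma hs_tens c u p q : c <= qhom_s tens p q ->
  c <= qhom_s tens (tens u p) (tens u q).
Proof.
rewrite !homsP => /andP[h1 h2]; apply/andP; split; rewrite -tA tmonor //.
Qed.

Lemma hs_hom1 c u p q : c <= qhom_s tens p q ->
  tens (qhom_s tens u p) c <= qhom_s tens u q.
Proof.
rewrite homsP => /andP[h1 h2]; rewrite homsP; apply/andP; split.
  rewrite tA; apply: le_trans h1; apply: tmonol.
  by rewrite -homP /qhom_s leIl.
rewrite (tC _ c) tA; apply: le_trans (tmonol _ h2) _.
by rewrite -homP /qhom_s leIr.
Qed.

Lemma hs_hom c u p q : c <= qhom_s tens p q ->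
  c <= qhom_s tens (qhom_s tens u p) (qhom_s tens u q).
Proof.
move=> h; rewrite homsP !hs_hom1 //; by rewrite homsC.
Qed.

End Q.

Lemma In_nth' (X : Type) (x0 : X) (s : list X) z : In z s ->
  exists i, (i < size s)%N /\ seq.nth x0 s i = z.
Proof.
elim: s => [//|b s IH] /= [->|/IH [i [hi e]]]; first by exists 0%N.
by exists i.+1.
Qed.

Unset Implicit Arguments.
Section Main.
Context {disp : Order.disp_t} {V : finTBLatticeType disp}.
Variables (tens : V -> V -> V) (k : V) (G : setFunctor) (F : @liftdata _ V G).
Hypothesis HQ : is_quantale tens k.
Hypothesis HF : is_lifting tens k F.
Hypothesis Hinit : preserves_initial tens k F.
Hypothesis Hfin : finitary G.

Definition LL := {n : nat & Gob G ('I_n -> V)}.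
Definition arL (l : LL) := projT1 l.
Definition lamL (l : LL) : @predlift_fun _ V G (arL l) := fun X a phi u =>
  @F ('I_(projT1 l) -> V) (qhom_sn tens (n:=projT1 l)) (Gmap G phi u) (projT2 l).

Lemma lamL_pl l : is_predlift tens k F (lamL l).
Proof.
split.
  move=> X a phi Ha Hphi u u'.
  have Hs := symV_hn HQ (projT1 l).
  have H1 := proj2 HF X _ a _ phi Ha Hs Hphi u u'.
  have H2 := symV_ev HQ (projT2 l) (proj1 HF _ _ Hs) (Gmap G phi u) (Gmap G phi u').
  exact: le_trans H1 H2.
by move=> X Y a b f phi _ _ _ _ u; rewrite /lamL Gmap_comp.
Qed.

Section Sem.
Variables (L : Type) (ar : L -> nat) (lam : forall l, @predlift_fun _ V G (ar l)).
Hypothesis Hl : forall l, is_predlift tens k F (lam l).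
Variables (X : Type) (a : X -> X -> V) (alpha : X -> Gob G X).
Hypothesis Hc : is_coalg tens k F a alpha.

Lemma sem_vfun phi : vfun a (qhom_s tens) (sem tens lam a alpha phi).
Proof.
elim: phi => [|p IHp q IHq|p IHp q IHq|u p IHp|u p IHp|l args IH] x y /=.
- by rewrite (homsP HQ) !lex1.
- exact: (hs_or HQ).
- exact: (hs_and HQ).
- exact: (hs_tens HQ).
- exact: (hs_hom HQ).
- case: (Hl l) => H1 _.
  apply: le_trans (proj2 Hc x y) _.
  apply: H1 (proj1 Hc) _ _ _ => z z'; apply/meetsP => i _; exact: IH.
Qed.

Lemma ld_lb phi x y : ld tens lam a alpha x y <=
  qhom_s tens (sem tens lam a alpha phi x) (sem tens lam a alpha phi y).
Proof.
rewrite /ld /bigmeetP; apply: (meets_inf (fun v => v)); apply/asbP; by exists phi.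
Qed.

Lemma ld_glb c x y : (forall phi, c <=
  qhom_s tens (sem tens lam a alpha phi x) (sem tens lam a alpha phi y)) ->
  c <= ld tens lam a alpha x y.
Proof. by move=> H; apply/meetsP => v /asbP [phi ->]. Qed.

Lemma ld_sym : is_symVcat tens k (ld tens lam a alpha).
Proof.
split.
- by move=> x; apply: ld_glb => phi; apply: (hs_refl HQ).
- move=> x y z; apply: ld_glb => phi; apply: (hs_trans HQ) => //; exact: ld_lb.
- move=> x y; apply/le_anti/andP; split; apply: ld_glb => phi;
  rewrite homsC; exact: ld_lb.
Qed.

Lemma ld_a : vfun a (ld tens lam a alpha) (fun z => z).
Proof. move=> x y; apply: ld_glb => phi; exact: sem_vfun. Qed.

End Sem.

Lemma crux X (a : X -> X -> V) (alpha : X -> Gob G X) (Hc : is_coalg tens k F a alpha)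
  x y : ld tens lamL a alpha x y <=
        @F X (ld tens lamL a alpha) (alpha x) (alpha y).
Proof.
set d := ld tens lamL a alpha.
have Hd : is_symVcat tens k d by apply: ld_sym; exact: lamL_pl.
have [s1 [w1 e1]] := Hfin _ (alpha x).
have [s2 [w2 e2]] := Hfin _ (alpha y).
pose s := s1 ++ s2.
pose A := {z : X | In z s}.
pose u1 : Gob G A := Gmap G (fun z : {z | In z s1} =>
   exist (fun z => In z s) (proj1_sig z) (in_or_app _ _ _ (or_introl (proj2_sig z)))) w1.
pose u2 : Gob G A := Gmap G (fun z : {z | In z s2} =>
   exist (fun z => In z s) (proj1_sig z) (in_or_app _ _ _ (or_intror (proj2_sig z)))) w2.
have E1 : Gmap G (@proj1_sig X _) u1 = alpha x.
  rewrite /u1 -Gmap_comp; exact: e1.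
have E2 : Gmap G (@proj1_sig X _) u2 = alpha y.
  rewrite /u2 -Gmap_comp; exact: e2.
pose dA (p q : A) := d (proj1_sig p) (proj1_sig q).
have HdA : is_symVcat tens k dA.
  case: Hd => h1 h2 h3; split; rewrite /dA.
  - by move=> p; apply: h1.
  - by move=> p q r; apply: h2.
  - by move=> p q; apply: h3.
pose T := ('I_(size s) * 'I_(size s) * V)%type.
pose wit (z z' : X) (v : V) : formula arL :=
  match excluded_middle_informative (exists phi : formula arL,
      v = qhom_s tens (sem tens lamL a alpha phi z) (sem tens lamL a alpha phi z')) with
  | left H => proj1_sig (constructive_indefinite_description _ H)
  | right _ => @fTop _ _ _ arL end.
have wit_spec : forall z z' v, (exists phi : formula arL,
      v = qhom_s tens (sem tens lamL a alpha phi z) (sem tens lamL a alpha phi z')) ->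
   v = qhom_s tens (sem tens lamL a alpha (wit z z' v) z) (sem tens lamL a alpha (wit z z' v) z').
  move=> z z' v H; rewrite /wit; case: excluded_middle_informative => // H'.
  by case: constructive_indefinite_description.
pose N := #|{: T}|.
pose phis : 'I_N -> formula arL := fun i => let t := enum_val i in
   wit (seq.nth x s t.1.1) (seq.nth x s t.1.2) t.2.
pose Phi : A -> 'I_N -> V := fun p i => sem tens lamL a alpha (phis i) (proj1_sig p).
have Hini : vinitial dA (qhom_sn tens (n:=N)) Phi.
  move=> p q; apply/le_anti/andP; split.
    by apply/meetsP => i _; apply: ld_lb.
  apply/meetsP => v /asbP Hv.
  have [ip [hip eip]] := In_nth' x (proj2_sig p).
  have [iq [hiq eiq]] := In_nth' x (proj2_sig q).
  pose t : T := (Ordinal hip, Ordinal hiq, v).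
  apply: le_trans (meets_inf (fun i => qhom_s tens (Phi p i) (Phi q i)) (j := enum_rank t) isT) _.
  rewrite /Phi /phis enum_rankK /= eip eiq -wit_spec //.
have HsN := symV_hn HQ N.
have Ei := Hinit _ _ _ _ _ HdA HsN Hini u1 u2.
have Em := Hinit _ _ _ _ _ HdA Hd (fun p q => erefl) u1 u2.
rewrite E1 E2 in Em.
pose l : LL := existT _ N (Gmap G Phi u2).
pose psi := @fLam _ _ _ arL l phis.
have Hy : k <= sem tens lamL a alpha psi y.
  rewrite /= /lamL /=.
  have -> : Gmap G (fun z i => sem tens lamL a alpha (phis i) z) (alpha y) = Gmap G Phi u2.
    by rewrite -E2 -Gmap_comp.
  by case: (proj1 HF _ _ HsN).
have := hom_k HQ Hy (ld_lb _ _ lamL _ a alpha psi x y).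
rewrite /= /lamL /=.
have -> : Gmap G (fun z i => sem tens lamL a alpha (phis i) z) (alpha x) = Gmap G Phi u1.
  by rewrite -E1 -Gmap_comp.
by rewrite -Ei Em.
Qed.

End Main.

Theorem corollary4 (disp : Order.disp_t) (V : finTBLatticeType disp)
  (tens : V -> V -> V) (k : V)
  (HQ : is_quantale tens k) (Hnontriv : (\bot : V) != \top)
  (G : setFunctor) (Hfin : finitary G)
  (F : @liftdata _ V G) (HF : is_lifting tens k F)
  (Hinit : preserves_initial tens k F) :
  exists (L : Type) (ar : L -> nat) (lam : forall l, @predlift_fun _ V G (ar l)),
    (forall l, is_predlift tens k F (lam l)) /\
    (forall (X : Type) (a : X -> X -> V) (alpha : X -> Gob G X),
       is_coalg tens k F a alpha ->
       forall x y : X, ld tens lam a alpha x y <= bd tens k F a alpha x y).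
Proof.
exists (LL G), (arL G), (lamL tens G F); split.
  exact: (lamL_pl tens k G F HQ HF).
move=> X a alpha Hc x y.
rewrite /bd /bigjoinP; apply: (joins_sup (fun v => v)); apply/asbP.
exists X, (ld tens (lamL tens G F) a alpha), alpha, (fun z => z); split; last split.
- split.
    exact: (ld_sym tens k G HQ _ _ (lamL tens G F) X a alpha).
  exact: (crux tens k G F HQ HF Hinit Hfin X a alpha Hc).
- split; last by move=> z; rewrite (Gmap_id (alpha z)).
  exact: (ld_a tens k G F HQ _ _ _ (lamL_pl tens k G F HQ HF) X a alpha Hc).
- by [].
Qed.
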